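(* Assume $\|\hat F'(y)-\hat F'(x)\|_F\le L_{\hat F}\|y-x\|$ for all $x,y\in\mathcal F$. Suppose that for Scheme 1 there is $x^*\in\mathcal L(\hat f_1(x_0))$ with $\hat F(x^* )=0$ and $\sigma_{\min}(\hat F'(x^* ))\ge\varsigma>0$. (i) If $\varsigma>\frac{2L_{\hat F}}{\alpha}$ for some fixed $\alpha\in(0,1)$, then for every $k\in\mathbb Z_+$, every $\varepsilon_k\ge0$, whenever $\|x_k-x^*\|<\frac{\varsigma}{L_{\hat F}}-\frac2\alpha$ and $$0<\tau_k\le\frac{\Big(\big(\alpha(\varsigma-L_{\hat F}\|x_k-x^*\|)-\frac{3L_{\hat F}}{2}\big)^2-\frac{L_{\hat F}^2}{4}\Big)\|x_k-x^*\|^4}{\|x_k-x^*\|^2L_k+2\varepsilon_k},$$ we have $x_{k+1}\in\mathcal L(\hat f_1(x_0))$ and $$\|x_{k+1}-x^*\|\le\frac{\frac{3L_{\hat F}\|x_k-x^*\|^2}{2}+\sqrt{\|x_k-x^*\|^2\big(\tau_kL_k+\frac{L_{\hat F}^2\|x_k-x^*\|^2}{4}\big)+2\tau_k\varepsilon_k}}{\varsigma-L_{\hat F}\|x_k-x^*\|}\le\alpha\|x_k-x^*\|^2.$$ (ii) If no such $\alpha\in(0,1)$ exists, then in Scheme 1 with $\tau_k=c_1\|x_k-x^*\|^2$ ($c_1>0$) and $\varepsilon_k=c_2\|x_k-x^*\|^2$ ($c_2\ge0$), whenever $\|x_k-x^*\|\le\varsigma\big/\big(\frac{5L_{\hat F}}{2}+\sqrt{2c_1L_{\hat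 F}+\frac{L_{\hat F}^2}{4}+2c_1c_2}\big)$, the middle expression above is at most $\|x_k-x^*\|$ (so $\|x_{k+1}-x^*\|\le\|x_k-x^*\|$) and $x_{k+1}\in\mathcal L(\hat f_1(x_0))$.
   Context: Let $F:\mathbb R^n\to\mathbb R^m$ be smooth, $\hat F=\frac1{\sqrt m}F$ with Jacobian $\hat F'(x)$; Euclidean norms, spectral norm for matrices, $\|\cdot\|_F$ Frobenius norm; $\sigma_{\min}$ is the minimal singular value. $\hat f_1(x)=\|\hat F(x)\|$, $\phi(x,y)=\|\hat F(x)+\hat F'(x)(y-x)\|$, $\psi_{x,L,\tau}(y)=\frac\tau2+\frac{\phi(x,y)^2}{2\tau}+\frac L2\|y-x\|^2$, $T_{L,\tau}(x)=\arg\min_y\psi_{x,L,\tau}(y)$. $\mathcal F$ is closed convex with nonempty interior, $\mathcal L(v)=\{x:\hat f_1(x)\le v\}$, and $\mathcal L(\hat f_1(x_0))\subseteq\mathcal F$ with the generated sequence in $\mathcal F$. Scheme 1 (input $x_0$, a rule choosing $\varepsilon_k\ge0,\tau_k>0$, $L\in(0,L_{\hat F}]$, $L_0=L$): for $k=0,1,\dots$: choose $\tau_k,\varepsilon_k$; compute $x_{k+1}$ with $\psi_{x_k,L_k,\tau_k}(x_{k+1})-\psi_{x_k,L_k,\tau_k}(T_{L_k,\tau_k}(x_k))\le\varepsilon_k$ and $\hat f_1(x_k)\ge\psi_{x_k,L_k,\tau_k}(x_{k+1})$; if $\hat f_1(x_{k+1})>\psi_{x_k,L_k,\tau_k}(x_{k+1})$,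 set $L_k:=\min\{2L_k,2L_{\hat F}\}$ and repeat the iteration; otherwise $L_{k+1}=\max\{L_k/2,L\}$. *)

(* Defs.v *)
From HB Require Import structures.
From mathcomp Require Import all_boot all_order all_algebra.
From mathcomp Require Import all_classical all_reals all_analysis.
Set Implicit Arguments. Unset Strict Implicit. Unset Printing Implicit Defensive.
Import Order.TTheory GRing.Theory Num.Theory.
Import numFieldNormedType.Exports.
Local Open Scope classical_set_scope.
Local Open Scope ring_scope.

Section Defs.
Variable R : realType.

Definition enorm (p q : nat) (A : 'M[R]_(p, q)) : R :=
  Num.sqrt (\sum_(i < p) \sum_(j < q) A i j ^+ 2).

(* minimal singular value of the m x n matrix M (given through its transpose
   A = M^T : 'M_(n,m), acting on row vectors: v *m A = (M v^T)^T):
   sigma_min(M) = inf_{|v| = 1} |M v|. *)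
Definition sigma_min (p q : nat) (A : 'M[R]_(p, q)) : R :=
  inf [set enorm (v *m A) | v in [set v : 'rV[R]_p | enorm v = 1]].

Fixpoint Ck (n k : nat) (f : 'rV[R]_n -> R) : Prop :=
  match k with
  | 0 => continuous f
  | k'.+1 => (forall x, differentiable f x) /\
             forall j : 'I_n, Ck k' (fun x => 'D_(delta_mx 0 j) f x)
  end.

Definition smooth (n m : nat) (F : 'rV[R]_n -> 'rV[R]_m) : Prop :=
  forall (i : 'I_m) (k : nat), Ck k (fun x => F x 0 i).

Section Scheme.
Variables (n m : nat) (F : 'rV[R]_n -> 'rV[R]_m).

(* \hat F = F / sqrt m and its Jacobian; the library Jacobian 'J F x : 'M_(n,m)
   is the transpose of the usual m x n Jacobian (row-vector convention). *)
Definition Fhat (x : 'rV[R]_n) : 'rV[R]_m := (Num.sqrt (m%:R))^-1 *: F x.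
Definition Jhat (x : 'rV[R]_n) : 'M[R]_(n, m) := (Num.sqrt (m%:R))^-1 *: 'J F x.

Definition f1hat (x : 'rV[R]_n) : R := enorm (Fhat x).
Definition phi (x y : 'rV[R]_n) : R := enorm (Fhat x + (y - x) *m Jhat x).
Definition psi (x : 'rV[R]_n) (L tau : R) (y : 'rV[R]_n) : R :=
  tau / 2 + phi x y ^+ 2 / (2 * tau) + L / 2 * enorm (y - x) ^+ 2.
Definition is_argmin (f : 'rV[R]_n -> R) (t : 'rV[R]_n) : Prop :=
  forall y, f t <= f y.
Definition level (v : R) : set 'rV[R]_n := [set x | f1hat x <= v].

(* starting value of L_k in the inner loop of iteration k *)
Definition Lstart (L : R) (Lk : nat -> R) (k : nat) : R :=
  match k with 0 => L | k'.+1 => Num.max (Lk k' / 2) L end.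

(* A run of Scheme 1: x k are the iterates, Lk k the accepted value of L_k,
   tau k, eps k the chosen parameters (at acceptance). *)
Definition Scheme1 (LF L : R) (x0 : 'rV[R]_n) (x : nat -> 'rV[R]_n)
  (Lk tau eps : nat -> R) : Prop :=
  x 0%N = x0 /\
  forall k : nat,
    [/\ 0 <= eps k /\ 0 < tau k,
        (exists j : nat, Lk k = Num.min (2 ^+ j * Lstart L Lk k) (2 * LF)),
        (exists t, is_argmin (psi (x k) (Lk k) (tau k)) t /\
           psi (x k) (Lk k) (tau k) (x k.+1) - psi (x k) (Lk k) (tau k) t <= eps k),
        psi (x k) (Lk k) (tau k) (x k.+1) <= f1hat (x k) &
        f1hat (x k.+1) <= psi (x k) (Lk k) (tau k) (x k.+1)].
End Scheme.
End Defs.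

(* Main.v *)
Require Import Defs.
From HB Require Import structures.
From mathcomp Require Import all_boot all_order all_algebra.
From mathcomp Require Import all_classical all_reals all_analysis.
From mathcomp Require Import ring lra.
Import Order.TTheory GRing.Theory Num.Theory.
Import numFieldNormedType.Exports.
Local Open Scope classical_set_scope.
Local Open Scope ring_scope.
Set Implicit Arguments. Unset Strict Implicit. Unset Printing Implicit Defensive.
Section E.
Variable R : realType.

Lemma CS_fin (I : finType) (a b : I -> R) :
  (\sum_i a i * b i) ^+ 2 <= (\sum_i a i ^+ 2) * (\sum_i b i ^+ 2).
Proof.
set A := \sum_i a i ^+ 2; set B := \sum_i b i ^+ 2; set C := \sum_i a i * b i.
have B0 : 0 <= B by apply: sumr_ge0 => i _; exact: sqr_ge0.
have key : \sum_i (B * a i - C * b i) ^+ 2 = B * (A * B - C ^+ 2).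
  transitivity (\sum_i (B ^+ 2 * a i ^+ 2 - (2 * B * C) * (a i * b i) + C ^+ 2 * b i ^+ 2)).
    by apply: eq_bigr => i _; ring.
  rewrite big_split /= sumrB -!mulr_sumr -/A -/B -/C; ring.
have H0 : 0 <= B * (A * B - C ^+ 2).
  by rewrite -key; apply: sumr_ge0 => i _; exact: sqr_ge0.
case: (ltgtP B 0) => [|Bp|Be]; first by rewrite ltNge B0.
  by rewrite -subr_ge0; move: H0; rewrite pmulr_rge0.
have bz : forall i, b i = 0.
  move=> i; apply/eqP; rewrite -sqrf_eq0; apply/eqP.
  by move/eqP: Be; rewrite psumr_eq0 => [/allP/(_ i (mem_index_enum i))/implyP/(_ isT)/eqP|j _]; [|exact: sqr_ge0].
have -> : C = 0 by rewrite /C big1 // => i _; rewrite bz mulr0.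
by rewrite Be expr0n /= mulr0.
Qed.

Lemma pair_sum p q (F : 'I_p -> 'I_q -> R) :
  \sum_(i < p) \sum_(j < q) F i j = \sum_(u : 'I_p * 'I_q) F u.1 u.2.
Proof. by rewrite pair_big. Qed.

Lemma sqrt_le (a b : R) : 0 <= b -> a <= b ^+ 2 -> Num.sqrt a <= b.
Proof.
move=> b0 ab; rewrite -(ger0_norm b0) -sqrtr_sqr.
case: (lerP 0 a) => a0; first by rewrite ler_sqrt // (le_trans a0 ab).
by rewrite ltr0_sqrtr // sqrtr_ge0.
Qed.

Lemma sq_le (x y : R) : 0 <= y -> x ^+ 2 <= y ^+ 2 -> x <= y.
Proof. move=> y0 h; nra. Qed.

Definition S2 p q (A : 'M[R]_(p, q)) := \sum_(i < p) \sum_(j < q) A i j ^+ 2.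

Lemma S2_ge0 p q (A : 'M[R]_(p, q)) : 0 <= S2 A.
Proof. by apply: sumr_ge0 => i _; apply: sumr_ge0 => j _; exact: sqr_ge0. Qed.

Lemma enormE p q (A : 'M[R]_(p, q)) : enorm A = Num.sqrt (S2 A).
Proof. by []. Qed.

Lemma enorm_ge0 p q (A : 'M[R]_(p, q)) : 0 <= enorm A.
Proof. exact: sqrtr_ge0. Qed.

Lemma enorm_sqr p q (A : 'M[R]_(p, q)) : enorm A ^+ 2 = S2 A.
Proof. by rewrite enormE sqr_sqrtr // S2_ge0. Qed.

Lemma enormD p q (A B : 'M[R]_(p, q)) : enorm (A + B) <= enorm A + enorm B.
Proof.
rewrite [enorm (A + B)]enormE; apply: sqrt_le; first by rewrite addr_ge0 // enorm_ge0.
have -> : S2 (A + B) = S2 A + 2 * (\sum_(u : 'I_p * 'I_q) A u.1 u.2 * B u.1 u.2) + S2 B.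
  rewrite /S2 !pair_sum mulr_sumr -!big_split /=; apply: eq_bigr => u _.
  rewrite !mxE; ring.
have cs := CS_fin (fun u : 'I_p * 'I_q => A u.1 u.2) (fun u => B u.1 u.2).
have eA : \sum_(u : 'I_p * 'I_q) A u.1 u.2 ^+ 2 = enorm A ^+ 2 by rewrite enorm_sqr /S2 pair_sum.
have eB : \sum_(u : 'I_p * 'I_q) B u.1 u.2 ^+ 2 = enorm B ^+ 2 by rewrite enorm_sqr /S2 pair_sum.
rewrite /= eA eB in cs.
have h : \sum_(u : 'I_p * 'I_q) A u.1 u.2 * B u.1 u.2 <= enorm A * enorm B.
  apply: sq_le; first by rewrite mulr_ge0 // enorm_ge0.
  by rewrite exprMn.
rewrite -!enorm_sqr; nra.
Qed.

Lemma enormZ p q (c : R) (A : 'M[R]_(p, q)) : enorm (c *: A) = `|c| * enorm A.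
Proof.
rewrite !enormE.
have -> : S2 (c *: A) = c ^+ 2 * S2 A.
  rewrite /S2 mulr_sumr; apply: eq_bigr => i _; rewrite mulr_sumr.
  by apply: eq_bigr => j _; rewrite mxE exprMn.
by rewrite sqrtrM ?sqr_ge0 // sqrtr_sqr.
Qed.

Lemma enormN p q (A : 'M[R]_(p, q)) : enorm (- A) = enorm A.
Proof. by rewrite -scaleN1r enormZ normrN normr1 mul1r. Qed.

Lemma enormB p q (A B : 'M[R]_(p, q)) : enorm (A - B) = enorm (B - A).
Proof. by rewrite -enormN opprB. Qed.

Lemma enorm_mul p q (v : 'rV[R]_p) (A : 'M[R]_(p, q)) :
  enorm (v *m A) <= enorm v * enorm A.
Proof.
rewrite [enorm (v *m A)]enormE; apply: sqrt_le; first by rewrite mulr_ge0 // enorm_ge0.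
rewrite exprMn !enorm_sqr /S2 !big_ord1.
rewrite [X in _ <= _ * X]exchange_big mulr_sumr; apply: ler_sum => j _.
rewrite mxE; exact: CS_fin (fun k => v 0 k) (fun k => A k j).
Qed.

Lemma dot_le m (u y : 'rV[R]_m) :
  \sum_j u 0 j * y 0 j <= enorm u * enorm y.
Proof.
apply: sq_le; first by rewrite mulr_ge0 // enorm_ge0.
rewrite exprMn !enorm_sqr /S2 !big_ord1; exact: CS_fin.
Qed.

Lemma dot_self m (u : 'rV[R]_m) : \sum_j u 0 j * u 0 j = enorm u ^+ 2.
Proof. by rewrite enorm_sqr /S2 big_ord1; apply: eq_bigr => j _; rewrite expr2. Qed.


Lemma sigma_min_le p q (A : 'M[R]_(p, q)) (v : 'rV[R]_p) :
  enorm v = 1 -> sigma_min A <= enorm (v *m A).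
Proof.
move=> v1; have : has_lbound [set enorm (v *m A) | v in [set v : 'rV[R]_p | enorm v = 1]].
  by exists 0 => _ [w _ <-]; exact: enorm_ge0.
move/ge_inf; apply; by exists v.
Qed.

Lemma sv_lower p q (A B : 'M[R]_(p, q)) (u : 'rV[R]_p) (s : R) :
  s <= sigma_min A -> (s - enorm (B - A)) * enorm u <= enorm (u *m B).
Proof.
move=> sA.
have [u0|up] := eqVneq (enorm u) 0.
  by rewrite u0 mulr0 enorm_ge0.
have upos : 0 < enorm u by rewrite lt_neqAle eq_sym up enorm_ge0.
set v := (enorm u)^-1 *: u.
have v1 : enorm v = 1 by rewrite enormZ ger0_norm ?invr_ge0 ?enorm_ge0 // mulVf.
have h1 := sigma_min_le A v1.
have h2 : enorm (v *m A) <= enorm (v *m B) + enorm (B - A).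
  have -> : v *m A = v *m B + v *m (A - B) by rewrite mulmxBr addrC subrK.
  apply: (le_trans (enormD _ _)); rewrite lerD2l.
  by apply: (le_trans (enorm_mul _ _)); rewrite v1 mul1r enormB.
have -> : u *m B = enorm u *: (v *m B) by rewrite -scalemxAl scalerA divff // scale1r.
rewrite enormZ ger0_norm ?enorm_ge0 // mulrC ler_pM2l //.
lra.
Qed.

Lemma coord_is_derive (V : normedModType R) p q (f : V -> 'M[R]_(p, q)) x v i j :
  differentiable f x -> is_derive x v (fun y => f y i j) ('D_v f x i j).
Proof.
move=> df.
have @cl : {linear 'M[R]_(p, q) -> R}.
  by exists (fun N : 'M[R]_(_, _) => N i j); do 2![eexists]; do ?[constructor];
     rewrite ?mxE// => ? *; rewrite ?mxE//; move=> ?; rewrite !mxE.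
have ccl : continuous cl by exact: coord_continuous.
have -> : (fun y => f y i j) = cl \o f by [].
have dc : differentiable (cl \o f) x.
  by apply: differentiable_comp => //; exact: linear_differentiable.
apply: DeriveDef; first exact: diff_derivable.
rewrite deriveE // diff_comp //; last exact: linear_differentiable.
by rewrite diff_lin //= deriveE.
Qed.

Lemma shift_is_derive (V W : normedModType R) (f : V -> W) (a d : V) (t : R) :
  derivable f (t *: d + a) d ->
  is_derive t 1 (fun s : R => f (s *: d + a)) ('D_d f (t *: d + a)).
Proof.
have e : (fun h : R => h^-1 *: (((fun s : R => f (s *: d + a)) \o shift t) (h *: 1) - f (t *: d + a)))
   = (fun h : R => h^-1 *: ((f \o shift (t *: d + a)) (h *: d) - f (t *: d + a))).
  apply/funext => h /=; congr (_ *: (f _ - _)).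
  rewrite /shift /=; rewrite -[h *: 1]/(h * 1) mulr1 scalerDl addrA //.
move=> df; apply: DeriveDef.
  by rewrite /derivable e.
by rewrite /derive e.
Qed.

Lemma diffF n m (F : 'rV[R]_n -> 'rV[R]_m) :
  smooth F -> forall p, differentiable F p.
Proof.
move=> sF p.
have -> : F = \sum_(j < m) (fun y => F y 0 j *: delta_mx 0 j).
  by rewrite fct_sumE; apply/funext => y; rewrite [LHS]row_sum_delta.
apply: differentiable_sum => j; apply: differentiableZl.
by have [] := sF j 1%N.
Qed.


Lemma taylor n m (G : 'rV[R]_n -> 'rV[R]_m) (Jg : 'rV[R]_n -> 'M[R]_(n, m))
  (a d : 'rV[R]_n) (K : R) :
  (forall p, differentiable G p) ->
  (forall p v, 'D_v G p = v *m Jg p) ->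
  (forall t, 0 <= t -> t <= 1 -> enorm (Jg (t *: d + a) - Jg a) <= K * t) ->
  enorm (G (d + a) - G a - d *m Jg a) <= K * enorm d / 2.
Proof.
move=> dG DG hJ.
set u := G (d + a) - G a - d *m Jg a.
set C := K * enorm d * enorm u.
set c0 := \sum_j u 0 j * (d *m Jg a) 0 j.
pose g := fun s : R => G (s *: d + a).
have dg : forall t : R, is_derive t (1:R) g (d *m Jg (t *: d + a)).
  move=> t; rewrite -DG; apply: shift_is_derive; exact: diff_derivable.
have dg' : forall t : R, differentiable g t.
  by move=> t; apply/derivable1_diffP; have [] := dg t.
pose h := \sum_(j < m) (fun s => u 0 j * g s 0 j) - c0 \*: id - (C / 2) \*: (id ^+ 2).
pose dh := fun t : R => \sum_(j < m) u 0 j * (d *m Jg (t *: d + a)) 0 j - c0 - C * t.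
have Dh : forall t : R, is_derive t (1:R) h (dh t).
  move=> t.
  have H1 : is_derive t (1:R) (\sum_(j < m) (fun s => u 0 j * g s 0 j))
      (\sum_(j < m) u 0 j * (d *m Jg (t *: d + a)) 0 j).
    apply: is_derive_sum => j.
    have := @coord_is_derive _ _ _ g t (1:R) 0 j (dg' t).
    have [_ ->] := dg t => H.
    by have := is_deriveZ (u 0 j) H.
  have H2 := is_deriveZ c0 (@is_derive_id _ R t 1).
  have H3 := is_deriveZ (C/2) (@is_deriveX _ R id 2 t 1 1 (@is_derive_id _ R t 1)).
  have := is_deriveB (is_deriveB H1 H2) H3.
  move=> HH; apply: (is_derive_eq HH).
  rewrite /dh /= expr1.
  have sA : forall k : R, k%:A = k by move=> k; exact: mulr1.
  have sZ : forall k x : R, k *: x = k * x by [].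
  rewrite !sA sZ.
  by congr (_ - _); field.
have ch : {within `[0, 1], continuous h}.
  apply: derivable_within_continuous => t _; by have [] := Dh t.
have [c /andP[]] := MVT (ltr01 : (0:R) < 1) (fun t _ => Dh t) ch.
rewrite !bnd_simp => c0p c1 hE.
have hv : forall s : R, h s = \sum_(j < m) u 0 j * G (s *: d + a) 0 j - c0 * s - C / 2 * s ^+ 2.
  by move=> s; rewrite /h /= !fctE fct_sumE /=.
rewrite !hv scale1r scale0r add0r in hE.
have lu : \sum_(j < m) u 0 j * G (d + a) 0 j - \sum_(j < m) u 0 j * G a 0 j - c0 = enorm u ^+ 2.
  rewrite -dot_self /c0 -!sumrB; apply: eq_bigr => j _; rewrite /u !mxE; ring.
have K0 : 0 <= K.
  have := hJ 1 ler01 (lexx 1); rewrite mulr1; apply: le_trans; exact: enorm_ge0.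
have dhc : dh c <= 0.
  rewrite /dh.
  have -> : \sum_(j < m) u 0 j * (d *m Jg (c *: d + a)) 0 j - c0
          = \sum_(j < m) u 0 j * (d *m (Jg (c *: d + a) - Jg a)) 0 j.
    rewrite /c0 -sumrB; apply: eq_bigr => j _; rewrite mulmxBr !mxE; ring.
  have e1 := dot_le u (d *m (Jg (c *: d + a) - Jg a)).
  have e2 := enorm_mul d (Jg (c *: d + a) - Jg a).
  have e3 := hJ c (ltW c0p) (ltW c1).
  have u0 := enorm_ge0 u; have d0 := enorm_ge0 d.
  have e4 : enorm u * enorm (d *m (Jg (c *: d + a) - Jg a)) <= enorm u * (enorm d * (K * c)).
    apply: ler_wpM2l => //; apply: (le_trans e2); exact: ler_wpM2l.
  rewrite /C; nra.
have u0 := enorm_ge0 u; have d0 := enorm_ge0 d.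
have : enorm u ^+ 2 <= C / 2.
  rewrite -lu; move: hE dhc; rewrite expr0n /= expr1n; nra.
rewrite /C => hu.
have Y0 : 0 <= K * enorm d by rewrite mulr_ge0.
have [ue|up] := eqVneq (enorm u) 0.
  by rewrite ue divr_ge0.
have upos : 0 < enorm u by rewrite lt_neqAle eq_sym up u0.
rewrite -(ler_pM2l upos) -expr2; apply: (le_trans hu).
by rewrite [X in X <= _](_ : _ = enorm u * (K * enorm d / 2)) //; ring.
Qed.


Lemma seg_in n (S : set 'rV[R]_n) (a b : 'rV[R]_n) (t : R) :
  convex_set S -> S a -> S b -> 0 <= t -> t <= 1 -> S (t *: (b - a) + a).
Proof.
move=> cS Sa Sb t0 t1.
have := cS b a (Itv01 t0 t1) (mem_set Sb) (mem_set Sa); rewrite inE.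
have E : (conv (Itv01 t0 t1) (b : convex_lmodType 'rV[R]_n) (a : convex_lmodType 'rV[R]_n) : 'rV[R]_n) = t *: (b - a) + a.
  rewrite -[LHS]/(t *: b + (1 - t) *: a).
  by rewrite scalerBr scalerBl scale1r addrA addrAC.
by rewrite E.
Qed.

Lemma Fhat_deriv n m (F : 'rV[R]_n -> 'rV[R]_m) :
  smooth F ->
  (forall p, differentiable (Fhat F) p) /\
  (forall p v, 'D_v (Fhat F) p = v *m Jhat F p).
Proof.
move=> sF; have dF := diffF sF.
have e : Fhat F = (Num.sqrt (m%:R))^-1 \*: F by [].
split => p; rewrite e; first exact: differentiableZ.
move=> v; rewrite deriveZ; last exact: diff_derivable.
by rewrite deriveEjacobian // /Jhat scalemxAr.
Qed.


Lemma core n m (F : 'rV[R]_n -> 'rV[R]_m) (Fset : set 'rV[R]_n) (LF : R)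
  (a xs y t : 'rV[R]_n) (Lk tau eps vs : R) :
  smooth F -> convex_set Fset ->
  (forall y z, Fset y -> Fset z -> enorm (Jhat F z - Jhat F y) <= LF * enorm (z - y)) ->
  Fset a -> Fset xs -> Fhat F xs = 0 -> vs <= sigma_min (Jhat F xs) ->
  0 <= LF -> 0 <= Lk -> 0 < tau ->
  is_argmin (psi F a Lk tau) t -> psi F a Lk tau y - psi F a Lk tau t <= eps ->
  enorm (y - xs) * (vs - LF * enorm (a - xs)) <=
    LF * enorm (a - xs) ^+ 2 / 2 +
    Num.sqrt (enorm (a - xs) ^+ 2 * (tau * Lk + LF ^+ 2 * enorm (a - xs) ^+ 2 / 4)
              + 2 * tau * eps).
Proof.
move=> sF cS hL Sa Sxs F0 hvs LF0 Lk0 tau0 amin hy.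
have [dF DF] := Fhat_deriv sF.
set r := enorm (a - xs).
have r0 : 0 <= r := enorm_ge0 _.
have rE : enorm (xs - a) = r by rewrite enormB.
have phi0 : phi F a xs <= LF * r ^+ 2 / 2.
  have := @taylor _ _ (Fhat F) (Jhat F) a (xs - a) (LF * r) dF DF.
  rewrite subrK F0 sub0r -opprD enormN rE => H.
  rewrite /phi expr2 mulrA; apply: H => s s0 s1.
  apply: (le_trans (hL _ _ Sa (seg_in cS Sa Sxs s0 s1))).
  by rewrite addrK enormZ rE ger0_norm // [s * r]mulrC mulrA.
set P0 := phi F a xs; set P1 := phi F a y.
have P00 : 0 <= P0 by exact: enorm_ge0.
have P10 : 0 <= P1 by exact: enorm_ge0.
have p1 : psi F a Lk tau y <= psi F a Lk tau xs + eps.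
  have := amin xs; lra.
have e1 := enorm_ge0 (y - a).
have sq1 : P1 ^+ 2 <= P0 ^+ 2 + tau * Lk * r ^+ 2 + 2 * tau * eps.
  move: p1; rewrite /psi -/P0 -/P1 rE => p1.
  set A1 := P1 ^+ 2 / (2 * tau) in p1; set A0 := P0 ^+ 2 / (2 * tau) in p1.
  have tau2 : 0 < 2 * tau by rewrite mulr_gt0.
  have E1 : P1 ^+ 2 = 2 * tau * A1 by rewrite /A1 mulrC divfK // gt_eqF.
  have E0 : P0 ^+ 2 = 2 * tau * A0 by rewrite /A0 mulrC divfK // gt_eqF.
  have q : 0 <= Lk / 2 * enorm (y - a) ^+ 2 by rewrite mulr_ge0 ?divr_ge0 ?sqr_ge0.
  have ineq : A1 <= A0 + Lk / 2 * r ^+ 2 + eps by lra.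
  have := ler_wpM2l (ltW tau2) ineq.
  rewrite E1 E0; lra.
have sq0 : P0 ^+ 2 <= LF ^+ 2 * r ^+ 4 / 4.
  have : P0 ^+ 2 <= (LF * r ^+ 2 / 2) ^+ 2.
    by rewrite expr2 [X in _ <= X]expr2; apply: ler_pM.
  move=> hh; apply: (le_trans hh); rewrite le_eqVlt; apply/orP; left; by apply/eqP; field.
have sqP1 : P1 <= Num.sqrt (r ^+ 2 * (tau * Lk + LF ^+ 2 * r ^+ 2 / 4) + 2 * tau * eps).
  rewrite -[P1]ger0_norm // -sqrtr_sqr; apply: ler_wsqrtr.
  apply: (le_trans sq1).
  have -> : r ^+ 2 * (tau * Lk + LF ^+ 2 * r ^+ 2 / 4) + 2 * tau * eps
          = LF ^+ 2 * r ^+ 4 / 4 + tau * Lk * r ^+ 2 + 2 * tau * eps by ring.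
  lra.
have sv := sv_lower (Jhat F a) (y - xs) hvs.
have lipa := hL xs a Sxs Sa.
have ey := enorm_ge0 (y - xs).
have s4 : enorm (y - xs) * (vs - LF * r) <= enorm ((y - xs) *m Jhat F a).
  apply: le_trans sv; rewrite mulrC; apply: ler_wpM2r => //; rewrite -/r in lipa; lra.
have s5 : enorm ((y - xs) *m Jhat F a) <= P1 + P0.
  have -> : (y - xs) *m Jhat F a = (Fhat F a + (y - a) *m Jhat F a) - (Fhat F a + (xs - a) *m Jhat F a).
    by rewrite opprD addrACA subrr add0r -mulmxBl opprB addrA subrK.
  by apply: (le_trans (enormD _ _)); rewrite enormN.
apply: (le_trans s4); apply: (le_trans s5); rewrite addrC; exact: lerD.
Qed.

Lemma part1_arith (LF vs alpha rk rk1 tau Lk eps : R) :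
  0 < LF -> 0 < alpha -> 0 <= rk -> 0 < tau -> 0 < Lk -> 0 <= eps ->
  rk < vs / LF - 2 / alpha ->
  tau <= (((alpha * (vs - LF * rk) - 3 * LF / 2) ^+ 2 - LF ^+ 2 / 4) * rk ^+ 4)
           / (rk ^+ 2 * Lk + 2 * eps) ->
  rk1 * (vs - LF * rk) <= LF * rk ^+ 2 / 2 +
    Num.sqrt (rk ^+ 2 * (tau * Lk + LF ^+ 2 * rk ^+ 2 / 4) + 2 * tau * eps) ->
  rk1 <= (3 * LF * rk ^+ 2 / 2 +
    Num.sqrt (rk ^+ 2 * (tau * Lk + LF ^+ 2 * rk ^+ 2 / 4) + 2 * tau * eps)) / (vs - LF * rk)
  /\ (3 * LF * rk ^+ 2 / 2 +
    Num.sqrt (rk ^+ 2 * (tau * Lk + LF ^+ 2 * rk ^+ 2 / 4) + 2 * tau * eps)) / (vs - LF * rk)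
     <= alpha * rk ^+ 2.
Proof.
move=> LF0 a0 rk0 t0 Lk0 e0 hr htau hk.
set S := rk ^+ 2 * (tau * Lk + LF ^+ 2 * rk ^+ 2 / 4) + 2 * tau * eps.
set D := vs - LF * rk.
have hD : 2 * LF / alpha < D.
  have := hr; rewrite -(ltr_pM2l LF0).
  have -> : LF * (vs / LF - 2 / alpha) = vs - 2 * LF / alpha.
    by field; rewrite gt_eqF // gt_eqF.
  rewrite /D => h; lra.
have Dp : 0 < D.
  by apply: lt_trans hD; rewrite divr_gt0 // mulr_gt0.
have aD : 2 * LF < alpha * D.
  have := hD; rewrite -(ltr_pM2l a0).
  by have -> : alpha * (2 * LF / alpha) = 2 * LF by field; rewrite gt_eqF.
set Q := alpha * D - 3 * LF / 2.
have Q0 : 0 <= Q by rewrite /Q; lra.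
set den := rk ^+ 2 * Lk + 2 * eps.
have den0 : 0 <= den by rewrite /den addr_ge0 ?mulr_ge0 ?sqr_ge0 // ltW.
have denp : 0 < den.
  rewrite lt_neqAle den0 andbT; apply/negP => /eqP d0.
  by move: htau; rewrite -/den -d0 invr0 mulr0 leNgt t0.
have ht : tau * den <= (Q ^+ 2 - LF ^+ 2 / 4) * rk ^+ 4.
  by rewrite -ler_pdivlMr.
have hS : S <= (Q * rk ^+ 2) ^+ 2.
  have -> : S = tau * den + LF ^+ 2 / 4 * rk ^+ 4 by rewrite /S /den; ring.
  have -> : (Q * rk ^+ 2) ^+ 2 = (Q ^+ 2 - LF ^+ 2 / 4) * rk ^+ 4 + LF ^+ 2 / 4 * rk ^+ 4 by ring.
  by rewrite lerD2r.
have sS : Num.sqrt S <= Q * rk ^+ 2 by apply: sqrt_le => //; rewrite mulr_ge0 // sqr_ge0.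
have r2 : 0 <= rk ^+ 2 := sqr_ge0 rk.
split.
  rewrite ler_pdivlMr //; apply: (le_trans hk); rewrite lerD2r.
  have : 0 <= LF * rk ^+ 2 by rewrite mulr_ge0 // ltW.
  move=> hh; lra.
rewrite ler_pdivrMr //.
have -> : alpha * rk ^+ 2 * D = 3 * LF * rk ^+ 2 / 2 + Q * rk ^+ 2 by rewrite /Q; ring.
by rewrite lerD2l.
Qed.

Lemma part2_arith (LF vs rk rk1 c1 c2 tau eps Lk : R) :
  0 < LF -> 0 < c1 -> 0 <= c2 -> 0 < rk -> 0 < Lk -> Lk <= 2 * LF ->
  tau = c1 * rk ^+ 2 -> eps = c2 * rk ^+ 2 ->
  rk <= vs / (5 * LF / 2 + Num.sqrt (2 * c1 * LF + LF ^+ 2 / 4 + 2 * c1 * c2)) ->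
  rk1 * (vs - LF * rk) <= LF * rk ^+ 2 / 2 +
    Num.sqrt (rk ^+ 2 * (tau * Lk + LF ^+ 2 * rk ^+ 2 / 4) + 2 * tau * eps) ->
  (3 * LF * rk ^+ 2 / 2 +
    Num.sqrt (rk ^+ 2 * (tau * Lk + LF ^+ 2 * rk ^+ 2 / 4) + 2 * tau * eps)) / (vs - LF * rk)
     <= rk /\ rk1 <= rk.
Proof.
move=> LF0 c10 c20 rk0 Lk0 LkF te ee hr hk.
set S := rk ^+ 2 * (tau * Lk + LF ^+ 2 * rk ^+ 2 / 4) + 2 * tau * eps.
set T := 2 * c1 * LF + LF ^+ 2 / 4 + 2 * c1 * c2.
have T0 : 0 <= T.
  rewrite /T; apply: addr_ge0; first apply: addr_ge0.
  - by rewrite mulr_ge0 // ?mulr_ge0 // ltW.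
  - by rewrite divr_ge0 // sqr_ge0.
  - by rewrite mulr_ge0 // mulr_ge0 // ltW.
set sT := Num.sqrt T.
have sT0 : 0 <= sT := sqrtr_ge0 T.
set W := 5 * LF / 2 + sT.
have W0 : 0 < W by rewrite /W; lra.
have rW : rk * W <= vs by rewrite -ler_pdivlMr.
set D := vs - LF * rk.
have DD : rk * (3 * LF / 2 + sT) <= D by rewrite /D; move: rW; rewrite /W; lra.
have Dp : 0 < D.
  by apply: lt_le_trans DD; rewrite mulr_gt0 //; lra.
have r2 : 0 <= rk ^+ 2 := sqr_ge0 rk.
have hS : S <= (rk ^+ 2 * sT) ^+ 2.
  have -> : (rk ^+ 2 * sT) ^+ 2 = rk ^+ 4 * T by rewrite exprMn sqr_sqrtr // -exprM.
  have -> : S = rk ^+ 4 * (c1 * Lk + LF ^+ 2 / 4 + 2 * c1 * c2) by rewrite /S te ee; ring.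
  apply: ler_wpM2l; first by rewrite exprn_ge0 // ltW.
  rewrite /T.
  have : c1 * Lk <= c1 * (2 * LF) by rewrite ler_wpM2l // ltW.
  move=> hh; lra.

have q : 0 <= rk ^+ 2 * sT by exact: mulr_ge0.
have sS : Num.sqrt S <= rk ^+ 2 * sT by exact: sqrt_le q hS.
have M : (3 * LF * rk ^+ 2 / 2 + Num.sqrt S) / D <= rk.
  rewrite ler_pdivrMr //.
  have h1 : rk * (rk * (3 * LF / 2 + sT)) <= rk * D by rewrite ler_wpM2l // ltW.
  apply: le_trans h1.
  have -> : rk * (rk * (3 * LF / 2 + sT)) = 3 * LF * rk ^+ 2 / 2 + rk ^+ 2 * sT by ring.
  by rewrite lerD2l.
split => //.
apply: le_trans M.
rewrite ler_pdivlMr //; apply: (le_trans hk); rewrite lerD2r.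
have : 0 <= LF * rk ^+ 2 by rewrite mulr_ge0 // ltW.
move=> hh; lra.
Qed.

End E.

Theorem theorem2 (R : realType) (n m : nat) (F : 'rV[R]_n -> 'rV[R]_m)
  (Fset : set 'rV[R]_n) (LF L : R) (x0 : 'rV[R]_n)
  (x : nat -> 'rV[R]_n) (Lk tau eps : nat -> R)
  (xs : 'rV[R]_n) (vs : R) :
  smooth F ->
  closed Fset -> convex_set Fset -> (exists z, (interior Fset) z) ->
  (forall y z, Fset y -> Fset z ->
     enorm (Jhat F z - Jhat F y) <= LF * enorm (z - y)) ->
  0 < L -> L <= LF ->
  Scheme1 F LF L x0 x Lk tau eps ->
  level F (f1hat F x0) `<=` Fset ->
  (forall k, Fset (x k)) ->
  level F (f1hat F x0) xs -> Fhat F xs = 0 ->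
  0 < vs -> vs <= sigma_min (Jhat F xs) ->
  let r k := enorm (x k - xs) in
  let mid k := (3 * LF * r k ^+ 2 / 2
                + Num.sqrt (r k ^+ 2 * (tau k * Lk k + LF ^+ 2 * r k ^+ 2 / 4)
                            + 2 * tau k * eps k))
               / (vs - LF * r k) in
  (* part (i) *)
  (forall alpha : R, 0 < alpha < 1 -> vs > 2 * LF / alpha ->
   forall k : nat,
     r k < vs / LF - 2 / alpha ->
     0 < tau k ->
     tau k <= (((alpha * (vs - LF * r k) - 3 * LF / 2) ^+ 2 - LF ^+ 2 / 4)
                * r k ^+ 4) / (r k ^+ 2 * Lk k + 2 * eps k) ->
     [/\ level F (f1hat F x0) (x k.+1),
         r k.+1 <= mid k &
         mid k <= alpha * r k ^+ 2]) /\
  (* part (ii) *)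
  (~ (exists alpha : R, 0 < alpha < 1 /\ vs > 2 * LF / alpha) ->
   forall c1 c2 : R, 0 < c1 -> 0 <= c2 ->
   (forall k, tau k = c1 * r k ^+ 2 /\ eps k = c2 * r k ^+ 2) ->
   forall k : nat,
     r k <= vs / (5 * LF / 2
                  + Num.sqrt (2 * c1 * LF + LF ^+ 2 / 4 + 2 * c1 * c2)) ->
     [/\ mid k <= r k,
         r k.+1 <= r k &
         level F (f1hat F x0) (x k.+1)]).
Proof.
move=> sF _ cvS _ hL L0 LLF [x0E hS] lvlS inS hxs Fxs0 vs0 hvs r mid.
have LF0 : 0 < LF by exact: lt_le_trans LLF.
have Lkpos : forall k, 0 < Lk k.
  move=> k; have [_ [j ->] _ _ _] := hS k.
  have Ls : L <= Lstart L Lk k.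
    by case: k => [|k] /=; [exact: lexx | rewrite le_max lexx orbT].
  rewrite lt_min; apply/andP; split.
    by apply: mulr_gt0; [exact: exprn_gt0 | exact: lt_le_trans Ls].
  by apply: mulr_gt0.
have LkF : forall k, Lk k <= 2 * LF.
  by move=> k; have [_ [j ->] _ _ _] := hS k; rewrite ge_min lexx orbT.
have lev : forall k, f1hat F (x k) <= f1hat F x0.
  elim=> [|k IH]; first by rewrite x0E.
  have [_ _ _ h1 h2] := hS k.
  exact: le_trans h2 (le_trans h1 IH).
have Sxs : Fset xs := lvlS _ hxs.
have key : forall k, r k.+1 * (vs - LF * r k) <= LF * r k ^+ 2 / 2 +
    Num.sqrt (r k ^+ 2 * (tau k * Lk k + LF ^+ 2 * r k ^+ 2 / 4) + 2 * tau k * eps k).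
  move=> k; have [[e0 t0] _ [t [am he]] _ _] := hS k.
  exact: (core sF cvS hL (inS k) Sxs Fxs0 hvs (ltW LF0) (ltW (Lkpos k)) t0 am he).
have rge0 : forall k, 0 <= r k by move=> k; exact: enorm_ge0.
split.
- move=> alpha /andP[a0 a1] hva k hr t0 htau.
  have [[e0 _] _ _ _ _] := hS k.
  have [h1 h2] := part1_arith LF0 a0 (rge0 k) t0 (Lkpos k) e0 hr htau (key k).
  by split => //; exact: lev.
- move=> _ c1 c2 c10 c20 htau k hr.
  have [tk ek] := htau k.
  have [[e0 t0] _ _ _ _] := hS k.
  have rk0 : 0 < r k.
    rewrite lt_neqAle rge0 andbT; apply/negP => /eqP r0.
    by move: t0; rewrite tk -r0 expr0n /= mulr0 ltxx.
  have [h1 h2] := part2_arith LF0 c10 c20 rk0 (Lkpos k) (LkF k) tk ek hr (key k).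
  by split => //; exact: lev.
Qed.
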